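(* Let $G$ be a finite simple graph with $n$ vertices, $m$ edges, and degree sequence $d(1),\dots,d(n)$. Then \[ \left(6k_3(G)-\sum_{i=1}^n d^2(i)+nm\right)\, bk(G)\;\ge\; n\,k_3(G)+8k_4(G)+2k_4^{(3)}(G). \]
   Context: A book of size $q$ is a set of $q$ triangles sharing a common edge; the booksize $bk(G)$ is the size of the largest book in $G$, i.e. the maximum over edges $uv$ of the number of common neighbours of $u$ and $v$. $k_s(G)$ denotes the number of $s$-cliques of $G$ (so $k_3(G)$ is the number of triangles and $k_4(G)$ the number of copies of $K_4$). $k_4^{(3)}(G)$ denotes the number of 4-vertex subsets of $V(G)$ inducing a subgraph isomorphic to a triangle together with an isolated vertex. *)

(* Defs.v *)
From mathcomp Require Import all_boot all_order all_algebra.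
Set Implicit Arguments. Unset Strict Implicit. Unset Printing Implicit Defensive.

Section Graph.
Variable (T : finType) (e : rel T).

Definition simple_graph := symmetric e /\ irreflexive e.

Definition deg (v : T) : nat := #|[set w | e v w]|.

Definition num_edges : nat := #|[set S : {set T} | (#|S| == 2) &&
   [forall u in S, forall v in S, (u != v) ==> e u v]]|.

Definition is_clique (S : {set T}) : bool :=
  [forall u in S, forall v in S, (u != v) ==> e u v].

Definition kcl (s : nat) : nat := #|[set S : {set T} | (#|S| == s) && is_clique S]|.

Definition codeg (u v : T) : nat := #|[set w | e u w && e v w]|.

(* booksize: max over edges uv of the number of common neighbours (0 if no edges) *)
Definition booksize : nat := \max_(p : T * T | e p.1 p.2) codeg p.1 p.2.

Definition tri_plus_iso (S : {set T}) : bool :=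
  (#|S| == 4) && [exists x in S, is_clique (S :\ x) &&
                    [forall y in S, (y != x) ==> ~~ e x y]].

Definition k4_3 : nat := #|[set S : {set T} | tri_plus_iso S]|.

End Graph.

(* Main.v *)
Require Import Defs.
From mathcomp Require Import all_boot all_order all_algebra.
From mathcomp Require Import zify.
Import GRing.Theory Num.Theory.
Set Implicit Arguments. Unset Strict Implicit. Unset Printing Implicit Defensive.

Lemma GL (T : finType) (k : nat) (Q : {set T} -> bool) :
  #|[set f : {ffun 'I_k -> T} | injectiveb f && Q (f @: setT)]| =
  k`! * #|[set S : {set T} | (#|S| == k) && Q S]|.
Proof.
rewrite -!sum1dep_card.
rewrite (partition_big (fun f : {ffun 'I_k -> T} => f @: setT)
   (fun S => (#|S| == k) && Q S)); last first.
  move=> f /andP[/injectiveP inj HQ]; rewrite HQ andbT card_imset // cardsT card_ord //.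
rewrite big_distrr /=; apply: eq_bigr => S /andP[/eqP HS HQ].
rewrite muln1 sum1dep_card.
transitivity #|[set f : {ffun 'I_k -> T} in ffun_on (mem S) | injectiveb f]|; last first.
  by rewrite card_inj_ffuns_on card_ord HS ffactnn.
apply: eq_card => f; rewrite !inE.
case: (injectiveP f) => [inj|]; last by rewrite /= andbF.
rewrite /= andbT.
apply/idP/idP.
  case/andP=> _ /eqP <-; apply/ffun_onP => x; apply/imsetP; exists x => //.
move=> /ffun_onP Hon.
have sub : f @: setT \subset S.
  apply/subsetP => y /imsetP [x _ ->]; exact: Hon.
have Heq : f @: setT == S.
  by rewrite eqEcard sub /= card_imset // cardsT card_ord HS.
by rewrite Heq (eqP Heq) HQ.
Qed.

Lemma cardE_sum (T : finType) (P : pred T) : #|[set x | P x]| = \sum_x (P x : nat).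
Proof. rewrite -sum1dep_card big_mkcond /=; apply: eq_bigr => x _; by case: (P x). Qed.

Lemma PW (T : finType) (e : rel T) k (f : {ffun 'I_k -> T}) : irreflexive e ->
  injectiveb f && is_clique e (f @: setT) = [forall i, forall j, (i != j) ==> e (f i) (f j)].
Proof.
move=> irr; apply/idP/idP.
- case/andP => /injectiveP inj /forall_inP Hc.
  apply/forallP => i; apply/forallP => j; apply/implyP => ij.
  move: (Hc (f i) (imset_f _ (in_setT i))) => /forall_inP /(_ (f j) (imset_f _ (in_setT j))) /implyP.
  by apply; rewrite (inj_eq inj).
- move=> H.
  have inj : injective f.
    move=> i j fij; apply/eqP; apply: contraT => ij.
    by have := implyP (forallP (forallP H i) j) ij; rewrite fij irr.
  rewrite (introT (injectiveP f) inj) /=.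
  apply/forall_inP => a /imsetP [i _ ->]; apply/forall_inP => b /imsetP [j _ ->].
  apply/implyP => fij; apply: (implyP (forallP (forallP H i) j)).
  by apply: contraNneq fij => ->.
Qed.

Lemma allim (T : finType) k (f : {ffun 'I_k -> T}) (p : pred T) :
  [forall y in f @: setT, p y] = [forall i, p (f i)].
Proof.
apply/forall_inP/forallP => H.
- move=> i; apply: H; exact: imset_f.
- move=> y /imsetP [i _ ->]; exact: H.
Qed.

Lemma CK (T : finType) (e : rel T) k (p : pred T) : irreflexive e ->
 #|[set f : {ffun 'I_k -> T} | [forall i, forall j, (i != j) ==> e (f i) (f j)] && [forall i, p (f i)]]|
  = k`! * #|[set S : {set T} | (#|S| == k) && (is_clique e S && [forall y in S, p y])]|.
Proof.
move=> irr; rewrite -(@GL _ k (fun S => is_clique e S && [forall y in S, p y])).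
by apply: eq_card => f; rewrite !inE andbA PW // allim.
Qed.

Lemma forall2 (P : pred 'I_2) : [forall i, P i] = P (inord 0) && P (inord 1).
Proof.
apply/forallP/andP => [H|[H0 H1]]; first by rewrite !H.
case=> [[|[|i]] Hi] //.
- by have -> : Ordinal Hi = inord 0 by apply: val_inj; rewrite /= inordK.
- by have -> : Ordinal Hi = inord 1 by apply: val_inj; rewrite /= inordK.
Qed.

Lemma forall3 (P : pred 'I_3) : [forall i, P i] = [&& P (inord 0), P (inord 1) & P (inord 2)].
Proof.
apply/forallP/and3P => [H|[H0 H1 H2]]; first by rewrite !H.
case=> [[|[|[|i]]] Hi] //.
- by have -> : Ordinal Hi = inord 0 by apply: val_inj; rewrite /= inordK.
- by have -> : Ordinal Hi = inord 1 by apply: val_inj; rewrite /= inordK.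
- by have -> : Ordinal Hi = inord 2 by apply: val_inj; rewrite /= inordK.
Qed.

Definition mk2 (T : finType) (u v : T) : {ffun 'I_2 -> T} := [ffun i : 'I_2 => nth u [:: u; v] i].
Definition mk3 (T : finType) (u v w : T) : {ffun 'I_3 -> T} := [ffun i : 'I_3 => nth u [:: u; v; w] i].

Lemma sum_ffun2 (T : finType) (F : {ffun 'I_2 -> T} -> nat) :
  \sum_f F f = \sum_u \sum_v F (mk2 u v).
Proof.
rewrite pair_big /=.
rewrite (reindex (fun p : T * T => mk2 p.1 p.2)) /=; last first.
  apply: onW_bij; exists (fun f : {ffun 'I_2 -> T} => (f (inord 0), f (inord 1))).
  - by case=> u v; rewrite /mk2 !ffunE /= !inordK.
  - move=> f; apply/ffunP => i; rewrite /mk2 ffunE /=.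
    case: i => [[|[|i]] Hi] //=; congr (f _); apply: val_inj; rewrite /= inordK //.
by [].
Qed.

Lemma sum_ffun3 (T : finType) (F : {ffun 'I_3 -> T} -> nat) :
  \sum_f F f = \sum_u \sum_v \sum_w F (mk3 u v w).
Proof.
rewrite pair_big /= pair_big /=.
rewrite (reindex (fun p : T * T * T => mk3 p.1.1 p.1.2 p.2)) /=; last first.
  apply: onW_bij; exists (fun f : {ffun 'I_3 -> T} => (f (inord 0), f (inord 1), f (inord 2))).
  - by case=> [[u v] w]; rewrite /mk3 !ffunE /= !inordK.
  - move=> f; apply/ffunP => i; rewrite /mk3 ffunE /=.
    case: i => [[|[|[|i]]] Hi] //=; congr (f _); apply: val_inj; rewrite /= inordK //.
by [].
Qed.

Definition tri (T : finType) (e : rel T) u v w := [&& e u v, e u w & e v w].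
Definition Rx (T : finType) (e : rel T) (p : pred T) :=
  [set S : {set T} | (#|S| == 3) && (is_clique e S && [forall y in S, p y])].

Lemma C2 (T : finType) (e : rel T) : symmetric e -> irreflexive e ->
  \sum_u \sum_v (e u v : nat) = 2 * num_edges e.
Proof.
move=> sym irr.
have := CK 2 predT irr; rewrite cardE_sum sum_ffun2.
have -> : num_edges e = #|[set S : {set T} | (#|S| == 2) && (is_clique e S && [forall y in S, predT y])]|.
  rewrite /num_edges; apply: eq_card => S; rewrite !inE /is_clique.
  by rewrite (_ : [forall y in S, predT y] = true) ?andbT //; apply/forall_inP.
move=> <-; apply: eq_bigr => u _; apply: eq_bigr => v _.
rewrite !forall2 !ffunE /= !eqxx -!val_eqE /= !inordK //= (sym v u).
by case: (e u v).
Qed.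

Lemma C3 (T : finType) (e : rel T) (p : pred T) : symmetric e -> irreflexive e ->
  \sum_u \sum_v \sum_w ([&& tri e u v w, p u, p v & p w] : nat) = 6 * #|Rx e p|.
Proof.
move=> sym irr.
have := CK 3 p irr; rewrite cardE_sum sum_ffun3 => H; rewrite (_ : 6 = 3`!) // -H.
apply: eq_bigr => u _; apply: eq_bigr => v _; apply: eq_bigr => w _.
rewrite !forall3 !ffunE /= !eqxx -!val_eqE /= !inordK //= (sym v u) (sym w u) (sym w v) /tri.
by case: (e u v); case: (e u w); case: (e v w); case: (p u); case: (p v); case: (p w).
Qed.

Lemma sum_in_card (I : finType) (A : {set I}) (P : pred I) :
  \sum_(i in A) (P i : nat) = #|[set i in A | P i]|.
Proof.
rewrite cardE_sum big_mkcond; apply: eq_bigr => i _.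
by case: (i \in A).
Qed.

Lemma clique_sub (T : finType) (e : rel T) (S R : {set T}) :
  is_clique e S -> R \subset S -> is_clique e R.
Proof.
move=> /forall_inP H /subsetP sub; apply/forall_inP => a aR.
have /forall_inP Ha := H a (sub a aR).
apply/forall_inP => b bR; exact: Ha (sub b bR).
Qed.

Lemma clique_pair (T : finType) (e : rel T) (S : {set T}) x y :
  is_clique e S -> x \in S -> y \in S -> x != y -> e x y.
Proof.
move=> /forall_inP H xS yS xy.
by move: (H x xS) => /forall_inP /(_ y yS) /implyP; apply.
Qed.

Lemma inj_bound (T : finType) (e : rel T) (x : T) (p : pred T) (A : {set {set T}}) :
  (forall S, S \in A -> [/\ x \in S, #|S| = 4, is_clique e (S :\ x) &
                           forall y, y \in S -> y != x -> p y]) ->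
  #|A| <= #|Rx e p|.
Proof.
move=> H.
have inj : {in A &, injective (fun S => S :\ x)}.
  move=> S1 S2 /H [x1 _ _ _] /H [x2 _ _ _] E.
  by rewrite -(setD1K x1) E setD1K.
rewrite -(card_in_imset inj); apply: subset_leq_card.
apply/subsetP => R /imsetP [S SA ->].
case: (H S SA) => xS cS cl pS.
rewrite inE cl /=; apply/andP; split.
  by have := cardsD1 x S; rewrite xS cS /=; lia.
apply/forall_inP => y; rewrite in_setD1 => /andP [yx yS]; exact: pS.
Qed.

Lemma K4bound (T : finType) (e : rel T) : symmetric e -> irreflexive e ->
  4 * kcl e 4 <= \sum_x #|Rx e (e x)|.
Proof.
move=> sym irr.
rewrite /kcl; set K := [set S : {set T} | _].
have -> : 4 * #|K| = \sum_x #|[set S in K | x \in S]|.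
  rewrite mulnC -sum_nat_const.
  transitivity (\sum_(S in K) \sum_x (x \in S : nat)).
    apply: eq_bigr => S; rewrite inE => /andP [/eqP cS _].
    by rewrite -cS -sum1_card big_mkcond; apply: eq_bigr => x _; case: (x \in S).
  rewrite exchange_big /=; apply: eq_bigr => x _; exact: sum_in_card.
apply: leq_sum => x _; apply: (inj_bound (x := x)) => S; rewrite !inE => /andP [/andP [/eqP cS cl] xS].
split => //.

  by apply: clique_sub cl _; apply: subD1set.
by move=> y yS yx; apply: clique_pair cl xS yS _; rewrite eq_sym.
Qed.

Lemma K43bound (T : finType) (e : rel T) : symmetric e -> irreflexive e ->
  k4_3 e <= \sum_x #|Rx e (fun y => ~~ e x y)|.
Proof.
move=> sym irr.
rewrite /k4_3; set TP := [set S : {set T} | _].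
pose good (S : {set T}) (x : T) := [&& x \in S, is_clique e (S :\ x) & [forall y in S, (y != x) ==> ~~ e x y]].
apply: (@leq_trans (\sum_x #|[set S in TP | good S x]|)).
  rewrite -sum1_card.
  apply: (@leq_trans (\sum_(S in TP) \sum_x (good S x : nat))).
    apply: leq_sum => S; rewrite inE => /andP [_ /existsP [x /andP [xS /andP [cl fa]]]].
    rewrite (bigD1 x) //= /good xS cl fa /=; exact: leq_addr.
  by rewrite exchange_big /=; apply: leq_sum => x _; rewrite sum_in_card.
apply: leq_sum => x _; apply: (inj_bound (x := x)) => S; rewrite !inE => /andP [tp].
case/and3P => xS cl /forall_inP fa.
move: tp; rewrite /tri_plus_iso => /andP [/eqP cS _].
split => //.
by move=> y yS yx; move: (fa y yS) => /implyP; apply.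
Qed.

Definition gg (T : finType) (e : rel T) u v := #|[set x | e u x == e v x]|.
Definition KK (T : finType) (e : rel T) u v w := #|[set x | [&& e u x, e v x & e w x]]|.
Definition II (T : finType) (e : rel T) u v w := #|[set x | [&& ~~ e u x, ~~ e v x & ~~ e w x]]|.

Lemma cardTE (T : finType) : #|T| = \sum_(x : T) 1.
Proof. by rewrite -cardsT cardE_sum. Qed.

Lemma F3 (T : finType) (e : rel T) u v :
  gg e u v + deg e u + deg e v = #|T| + 2 * codeg e u v.
Proof.
rewrite /gg /deg /codeg !cardE_sum cardTE big_distrr -!big_split /=.
by apply: eq_bigr => x _; case: (e u x); case: (e v x).
Qed.

Lemma F7 (T : finType) (e : rel T) u v w :
  gg e u v + gg e v w + gg e u w = #|T| + 2 * KK e u v w + 2 * II e u v w.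
Proof.
rewrite /gg /KK /II !cardE_sum cardTE !big_distrr -!big_split /=.
by apply: eq_bigr => x _; case: (e u x); case: (e v x); case: (e w x).
Qed.

Lemma F4 (T : finType) (e : rel T) : symmetric e ->
  \sum_u \sum_v (e u v : nat) * (deg e u + deg e v) = 2 * \sum_u deg e u ^ 2.
Proof.
move=> sym.
rewrite mul2n -addnn.
under eq_bigr do under eq_bigr do rewrite mulnDr.
under eq_bigr do rewrite big_split /=.
rewrite big_split /=; congr (_ + _).
  apply: eq_bigr => u _; rewrite -big_distrl /= /deg cardE_sum; by rewrite expnS expn1.
rewrite exchange_big /=; apply: eq_bigr => v _; rewrite -big_distrl /= /deg cardE_sum expnS expn1.
by congr (_ * _); apply: eq_bigr => u _; rewrite sym.
Qed.

Lemma F2 (T : finType) (e : rel T) (G : T -> T -> nat) :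
  \sum_u \sum_v (e u v : nat) * G u v * codeg e u v =
  \sum_u \sum_v \sum_w (tri e u v w : nat) * G u v.
Proof.
apply: eq_bigr => u _; apply: eq_bigr => v _.
rewrite /codeg cardE_sum big_distrr /=; apply: eq_bigr => w _.
by rewrite /tri; case: (e u v); case: (e u w); case: (e v w); rewrite /= ?mul0n ?muln0 ?muln1 ?mul1n.
Qed.

Lemma exch3 (T : finType) (F : T -> T -> T -> T -> nat) :
  \sum_u \sum_v \sum_w \sum_x F u v w x = \sum_x \sum_u \sum_v \sum_w F u v w x.
Proof.
transitivity (\sum_u \sum_x \sum_v \sum_w F u v w x); last by rewrite exchange_big.
apply: eq_bigr => u _.
transitivity (\sum_v \sum_x \sum_w F u v w x); last by rewrite exchange_big.
by apply: eq_bigr => v _; rewrite exchange_big.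
Qed.

Lemma F6a (T : finType) (e : rel T) (G : T -> T -> nat) : symmetric e ->
  \sum_u \sum_v \sum_w (tri e u v w : nat) * G v w =
  \sum_u \sum_v \sum_w (tri e u v w : nat) * G u v.
Proof.
move=> sym.
transitivity (\sum_v \sum_w \sum_u (tri e u v w : nat) * G v w).
  rewrite exchange_big /=; apply: eq_bigr => v _; by rewrite exchange_big.
apply: eq_bigr => v _; apply: eq_bigr => w _; apply: eq_bigr => u _.
by rewrite /tri (sym u v) (sym u w); case: (e v u); case: (e w u); case: (e v w).
Qed.

Lemma F6b (T : finType) (e : rel T) (G : T -> T -> nat) : symmetric e ->
  \sum_u \sum_v \sum_w (tri e u v w : nat) * G u w =
  \sum_u \sum_v \sum_w (tri e u v w : nat) * G u v.
Proof.
move=> sym.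
apply: eq_bigr => u _; rewrite exchange_big /=.
apply: eq_bigr => w _; apply: eq_bigr => v _.
by rewrite /tri (sym v w); case: (e u v); case: (e u w); case: (e w v).
Qed.

Lemma F8 (T : finType) (e : rel T) : symmetric e -> irreflexive e ->
  \sum_u \sum_v \sum_w (tri e u v w : nat) * KK e u v w = \sum_x 6 * #|Rx e (e x)|.
Proof.
move=> sym irr.
transitivity (\sum_u \sum_v \sum_w \sum_x ([&& tri e u v w, e x u, e x v & e x w] : nat)).
  apply: eq_bigr => u _; apply: eq_bigr => v _; apply: eq_bigr => w _.
  rewrite /KK cardE_sum big_distrr /=; apply: eq_bigr => x _.
  by rewrite (sym x u) (sym x v) (sym x w); case: (tri e u v w); case: (e u x); case: (e v x); case: (e w x).
rewrite exch3; apply: eq_bigr => x _; exact: C3.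
Qed.

Lemma F9 (T : finType) (e : rel T) : symmetric e -> irreflexive e ->
  \sum_u \sum_v \sum_w (tri e u v w : nat) * II e u v w
   = \sum_x 6 * #|Rx e (fun y => ~~ e x y)|.
Proof.
move=> sym irr.
transitivity (\sum_u \sum_v \sum_w \sum_x
   ([&& tri e u v w, ~~ e x u, ~~ e x v & ~~ e x w] : nat)).
  apply: eq_bigr => u _; apply: eq_bigr => v _; apply: eq_bigr => w _.
  rewrite /II cardE_sum big_distrr /=; apply: eq_bigr => x _.
  by rewrite (sym x u) (sym x v) (sym x w); case: (tri e u v w); case: (e u x); case: (e v x); case: (e w x).
rewrite exch3; apply: eq_bigr => x _; exact: (C3 (fun y => ~~ e x y)).
Qed.
Local Open Scope ring_scope.
Lemma final_arith (n m k3 k4 k43 D b SG Z SK SI : nat) :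
  (SG + 2 * D = n * (2 * m) + 2 * (6 * k3))%N ->
  (Z <= SG * b)%N ->
  (3 * Z = n * (6 * k3) + 2 * SK + 2 * SI)%N ->
  (24 * k4 <= SK)%N -> (6 * k43 <= SI)%N ->
  ((6 * k3)%:Z - (D)%:Z + (n * m)%:Z) * b%:Z >= (n * k3 + 8 * k4 + 2 * k43)%:Z.
Proof.
move=> HA HB HD HK HI.
have HX : (D <= 6 * k3 + n * m)%N by lia.
have -> : ((6 * k3)%:Z - D%:Z + (n * m)%:Z) = (6 * k3 + n * m - D)%N%:Z.
  lia.
rewrite -PoszM lez_nat.
have HS : SG = (2 * (6 * k3 + n * m - D))%N by lia.
rewrite HS in HB.
nia.
Qed.
Unset Implicit Arguments.
Theorem theorem1 (T : finType) (e : rel T) :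
  simple_graph e ->
  ((6 * kcl e 3)%:Z - (\sum_(i : T) (deg e i) ^ 2)%:Z + (#|T| * num_edges e)%:Z)
     * (booksize e)%:Z
  >= (#|T| * kcl e 3 + 8 * kcl e 4 + 2 * k4_3 e)%:Z.
Proof.
case=> sym irr.
have k3E : kcl e 3 = #|Rx e predT|.
  rewrite /kcl; apply: eq_card => S; rewrite !inE.
  by rewrite (_ : [forall y in S, predT y] = true) ?andbT //; apply/forall_inP.
have Htri : (\sum_u \sum_v \sum_w (tri e u v w : nat) = 6 * kcl e 3)%N.
  rewrite k3E -(C3 predT sym irr).
  by apply: eq_bigr => u _; apply: eq_bigr => v _; apply: eq_bigr => w _; rewrite /= !andbT.
set SG := (\sum_u \sum_v (e u v : nat) * gg e u v)%N.
set Z := (\sum_u \sum_v (e u v : nat) * gg e u v * codeg e u v)%N.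
set SK := (\sum_u \sum_v \sum_w (tri e u v w : nat) * KK e u v w)%N.
set SI := (\sum_u \sum_v \sum_w (tri e u v w : nat) * II e u v w)%N.
apply: (final_arith (SG := SG) (Z := Z) (SK := SK) (SI := SI)).
- have Hc : (\sum_u \sum_v (e u v : nat) * codeg e u v = \sum_u \sum_v \sum_w (tri e u v w : nat))%N.
    apply: eq_bigr => u _; apply: eq_bigr => v _.
    rewrite /codeg cardE_sum big_distrr /=; apply: eq_bigr => w _.
    by rewrite /tri; case: (e u v); case: (e u w); case: (e v w).
  rewrite -(F4 sym) -C2 // -Htri -Hc /SG -big_split /=.
  rewrite !big_distrr /= -big_split /=; apply: eq_bigr => u _.
  rewrite -big_split /= !big_distrr /= -big_split /=; apply: eq_bigr => v _.
  by rewrite -mulnDr addnA F3 mulnDr mulnCA (mulnC _ #|T|).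
- rewrite /Z /SG big_distrl /=; apply: leq_sum => u _; rewrite big_distrl /=.
  apply: leq_sum => v _.
  case Huv: (e u v); rewrite /= ?mul0n // !mul1n leq_mul2l; apply/orP; right.
  exact: (leq_bigmax_cond (u, v)).
- have HZ : Z = (\sum_u \sum_v \sum_w (tri e u v w : nat) * gg e u v)%N by exact: F2.
  have H3 : forall x, (3 * x = x + (x + x))%N by move=> x; lia.
  rewrite HZ H3.
  rewrite -{2}(F6a (gg e) sym) -{2}(F6b (gg e) sym).
  rewrite -!big_split /=.
  transitivity (\sum_u \sum_v \sum_w (tri e u v w : nat) * (#|T| + 2 * KK e u v w + 2 * II e u v w))%N.
    apply: eq_bigr => u _; rewrite -!big_split /=; apply: eq_bigr => v _.
    rewrite -!big_split /=; apply: eq_bigr => w _.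
    by rewrite -F7 !mulnDr addnA.

  rewrite -Htri /SK /SI !big_distrr /= -!big_split /=.
  apply: eq_bigr => u _; rewrite !big_distrr /= -!big_split /=; apply: eq_bigr => v _.
  rewrite !big_distrr /= -!big_split /=; apply: eq_bigr => w _.

  lia.
- rewrite /SK F8 // -big_distrr /= (_ : 24 = 6 * 4)%N // -mulnA leq_mul2l.
  by rewrite K4bound.
- rewrite /SI F9 // -big_distrr /= leq_mul2l.
  by rewrite K43bound.
Qed.
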